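(* Let $b\in L^1_{loc}(\mathbf{R}^n\times\mathbf{R})$ be a vector field. There is a constant $C$ depending only on $n$ such that for all $x,y\in\mathbf{R}^n$ and $t>0$, \[ \int_0^t\!\!\int_{\mathbf{R}^n}\frac{1}{(|x-z|+\sqrt{t-\tau})^{n+1}}\cdot\frac{|b(z,\tau)|}{(|z-y|+\sqrt{\tau})^{n+1}}\,dz\,d\tau\le C\,B(b,0,t)\,K_1(x,t;y,0). \]
   Context: $K_1(x,t;y,s)=\dfrac{1}{(|x-y|+\sqrt{t-s})^{n+1}}$ for $t\ge s$ (with $(x,t)\neq(y,s)$), and $K_1(x,t;y,s)=0$ for $s>t$. For $l<t$, \[ B(b,l,t)=\sup_{x\in\mathbf{R}^n}\int_l^t\!\!\int_{\mathbf{R}^n}\big[K_1(x,t;y,s)+K_1(x,s;y,l)\big]\,|b(y,s)|\,dy\,ds . \] *)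

(* Defs.v *)
From HB Require Import structures.
From mathcomp Require Import all_boot all_order all_algebra.
From mathcomp Require Import all_classical all_reals all_analysis.
Set Implicit Arguments. Unset Strict Implicit. Unset Printing Implicit Defensive.
Import Order.TTheory GRing.Theory Num.Theory.
Import numFieldNormedType.Exports.
Local Open Scope classical_set_scope.
Local Open Scope ring_scope.

Definition enorm (R : realType) (n : nat) (v : 'rV[R]_n) : R :=
  Num.sqrt (\sum_(i < n) v ord0 i ^+ 2).

(* Lebesgue integral over R^n of an extended-real valued function, as the
   iterated Lebesgue integral over the coordinates (for nonnegative
   measurable integrands this is the integral w.r.t. n-dim Lebesgue measure,
   by Tonelli). *)
Fixpoint iint (R : realType) (n : nat) : ('rV[R]_n -> \bar R) -> \bar R :=
  match n with
  | 0 => fun f => f 0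
  | n'.+1 => fun f =>
      (\int[@lebesgue_measure R]_x iint (fun v : 'rV[R]_n' => f (row_mx (\row_(j < 1) x) v)))%E
  end.

Definition borel_measurable_RnR (R : realType) (n : nat) (f : 'rV[R]_n -> R -> R) : Prop :=
  forall B : set R, measurable B ->
    (<<s @open ('rV[R]_n * R)%type >>) [set p | B (f p.1 p.2)].

Definition locally_integrable_vf (R : realType) (n : nat)
    (b : 'rV[R]_n -> R -> 'rV[R]_n) : Prop :=
  (forall i : 'I_n, borel_measurable_RnR (fun z tau => b z tau ord0 i)) /\
  (forall r : R, 0 < r ->
     (\int[@lebesgue_measure R]_(tau in `[(- r)%R, r%R])
        iint (fun z : 'rV[R]_n =>
                if (enorm z <= r)%R then (enorm (b z tau))%:E else 0%E) < +oo)%E).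

Definition K1 (R : realType) (n : nat) (x : 'rV[R]_n) (t : R) (y : 'rV[R]_n) (s : R)
  : \bar R :=
  if (t < s)%R then 0%E
  else if (x == y) && (t == s) then +oo%E
  else ((enorm (x - y) + Num.sqrt (t - s)) ^+ n.+1)^-1%:E.

Definition Bfun (R : realType) (n : nat) (b : 'rV[R]_n -> R -> 'rV[R]_n) (l t : R)
  : \bar R :=
  ereal_sup (range (fun x : 'rV[R]_n =>
    (\int[@lebesgue_measure R]_(s in `]l%R, t%R[)
       iint (fun y : 'rV[R]_n => (K1 x t y s + K1 x s y l) * (enorm (b y s))%:E))%E)).

(* Main.v *)
Require Import Defs.
From HB Require Import structures.
From mathcomp Require Import all_boot all_order all_algebra.
From mathcomp Require Import all_classical all_reals all_analysis.
From mathcomp Require Import measurable_realfun.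
From mathcomp Require Import ring lra.
Set Implicit Arguments. Unset Strict Implicit. Unset Printing Implicit Defensive.
Import Order.TTheory GRing.Theory Num.Theory.
Import numFieldNormedType.Exports.
Local Open Scope classical_set_scope.
Local Open Scope ring_scope.

Section J.
Variable R : realType.
Local Open Scope ereal_scope.
Notation LR := (measurableTypeR R).

Fixpoint Jm (k : nat) : forall d (T : measurableType d), (T -> 'rV[R]_k -> \bar R) -> Prop :=
  match k return forall d (T : measurableType d), (T -> 'rV[R]_k -> \bar R) -> Prop with
  | 0 => fun d (T : measurableType d) (f : T -> 'rV[R]_0 -> \bar R) =>
       measurable_fun [set: T] (fun p => f p 0%R)
  | k'.+1 => fun d (T : measurableType d) (f : T -> 'rV[R]_k'.+1 -> \bar R) =>
     @Jm k' _ (T * LR)%type (fun q v => f q.1 (row_mx (\row_(j < 1) (q.2 : R)) v))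
  end.

Lemma iint_ge0 k (f : 'rV[R]_k -> \bar R) : (forall v, 0 <= f v) -> 0 <= iint f.
Proof.
elim: k f => [|k IH] f f0 /=; first exact: f0.
apply: integral_ge0 => x _; exact: IH.
Qed.

Lemma Jm_meas k : forall d (T : measurableType d) (f : T -> 'rV[R]_k -> \bar R),
  (forall p v, 0 <= f p v) -> Jm f -> measurable_fun setT (fun p => iint (f p)).
Proof.
elim: k => [|k IH] d T f f0 /= Jf; first exact: Jf.
have mF := IH _ _ _ (fun q v => f0 q.1 _) Jf.
exact: (@measurable_fun_fubini_tonelli_F _ _ T _ R (@lebesgue_measure R) _ mF
   (fun q => iint_ge0 (fun v => f0 q.1 _))).
Qed.

Lemma iintD k : forall d (T : measurableType d) (f g : T -> 'rV[R]_k -> \bar R),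
  (forall p v, 0 <= f p v) -> (forall p v, 0 <= g p v) -> Jm f -> Jm g ->
  forall p, iint (fun v => f p v + g p v) = iint (f p) + iint (g p).
Proof.
elim: k => [|k IH] d T f g f0 g0 Jf Jg p //=.
have mF := Jm_meas (fun q v => f0 q.1 _) Jf.
have mG := Jm_meas (fun q v => g0 q.1 _) Jg.
under eq_integral => x _ do rewrite (IH _ _ _ _ (fun q v => f0 q.1 _) (fun q v => g0 q.1 _) Jf Jg (p, x)).
apply: ge0_integralD => //.
- by move=> x _; apply: iint_ge0.
- exact: (measurable_fun_pair2 p mF).
- by move=> x _; apply: iint_ge0.
- exact: (measurable_fun_pair2 p mG).
Qed.

Lemma iintZ k : forall d (T : measurableType d) (f : T -> 'rV[R]_k -> \bar R) (c : R),
  (0 <= c)%R -> (forall p v, 0 <= f p v) -> Jm f ->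
  forall p, iint (fun v => c%:E * f p v) = c%:E * iint (f p).
Proof.
elim: k => [|k IH] d T f c c0 f0 Jf p //=.
have mF := Jm_meas (fun q v => f0 q.1 _) Jf.
under eq_integral => x _ do rewrite (IH _ _ _ _ c0 (fun q v => f0 q.1 _) Jf (p, x)).
apply: (ge0_integralZl_EFin _ measurableT) => //.
- by move=> x _; apply: iint_ge0.
- exact: (measurable_fun_pair2 p mF).
Qed.

Lemma int_mono d (T : measurableType d) (mu : {measure set T -> \bar R}) (D : set T)
  (f g : T -> \bar R) : (forall x, D x -> 0 <= f x) -> (forall x, D x -> f x <= g x) ->
  \int[mu]_(x in D) f x <= \int[mu]_(x in D) g x.
Proof.
move=> f0 fg.
have g0 : forall x, D x -> 0 <= g x by move=> x Dx; exact: le_trans (f0 _ Dx) (fg _ Dx).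
rewrite (ge0_integralE _ f0) (ge0_integralE _ g0).
apply: le_ereal_sup => _ [h /= hf <-]; exists h => //= x.
apply: le_trans (hf x) _.
rewrite /patch; case: ifP => // /set_mem Dx; exact: fg.
Qed.

Lemma iint_mono k (f g : 'rV[R]_k -> \bar R) : (forall v, 0 <= f v) -> (forall v, f v <= g v) ->
  iint f <= iint g.
Proof.
elim: k f g => [|k IH] f g f0 fg /=; first exact: fg.
apply: int_mono => x _; [exact: iint_ge0| exact: IH].
Qed.

Lemma Jm_crit k : forall d (T : measurableType d) (f : T -> 'rV[R]_k -> \bar R),
 (forall d' (T' : measurableType d') (g : T' -> T) (w : T' -> 'rV[R]_k),
    measurable_fun setT g -> (forall j, measurable_fun setT (fun q => w q ord0 j : R)) ->
    measurable_fun setT (fun q => f (g q) (w q))) -> Jm f.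
Proof.
elim: k => [|k IH] d T f H /=.
  apply: (H _ _ id (fun _ => 0%R)) => //; by move=> [].
apply: IH => d' T' g w mg mw.
apply: (H _ _ (fst \o g) (fun q => row_mx (\row_(j < 1) ((g q).2 : R)) (w q))).
  exact: measurableT_comp.
move=> j; have := @fintype.splitK 1%N k j; case: (@fintype.split 1%N k j) => [j1|j2] <- /=.
  have -> : (fun q : T' => row_mx (\row_(j < 1) ((g q).2 : R)) (w q) ord0 (lshift k j1))
     = (fun q => ((g q).2 : R)).
    by apply/funext => q; rewrite row_mxEl mxE.
  exact: (measurableT_comp (@measurable_snd _ _ T LR) mg).
have -> : (fun q : T' => row_mx (\row_(j < 1) ((g q).2 : R)) (w q) ord0 (rshift 1 j2))
     = (fun q => w q ord0 j2).
  by apply/funext => q; rewrite row_mxEr.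
exact: mw.
Qed.

End J.
Section Bridge.
Variable R : realType.
Variable N : nat.
Variables (d' : measure_display) (T' : measurableType d').
Variables (w : T' -> 'rV[R]_N) (s : T' -> R).
Hypothesis mw : forall j, measurable_fun setT (fun q => w q ord0 j).
Hypothesis ms : measurable_fun setT s.
Let a q : 'rV[R]_N * R := (w q, s q).

Lemma ball_pre (p : 'rV[R]_N * R) (r : R) : measurable (a @^-1` ball p r).
Proof.
have [r0|r0] := leP r 0.
  suff -> : a @^-1` ball p r = set0 by [].
  apply/seteqP; split => // q /= [] /= [] + _; rewrite ltNge r0 //.
have -> : a @^-1` ball p r = (\bigcap_(j in [set: 'I_N]) ((fun q => w q ord0 j) @^-1` ball (p.1 ord0 j) r))
    `&` (s @^-1` ball p.2 r).
  apply/seteqP; split => q /=.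
    move=> [[_ H1] H2]; split => //= j _; exact: (H1 ord0 j).
  move=> [H1 H2]; split => //=; split => // i j.
  by rewrite (ord1 i); exact: H1.
apply: measurableI.
  apply: fin_bigcap_measurable; first exact: finite_finset.
  move=> j _; rewrite -[X in measurable X]setTI.
  apply: (mw j) => //; apply: open_measurable; exact: ball_open.
rewrite -[X in measurable X]setTI; apply: ms => //.
apply: open_measurable; exact: ball_open.
Qed.
Let U := ({ffun 'I_N -> rat} * rat * rat)%type.
Let Bx (u : U) : set ('rV[R]_N * R) :=
  ball (\row_j (ratr (u.1.1 j) : R), (ratr u.1.2 : R)) (ratr u.2 : R).

Lemma rat_near (x r : R) : 0 < r -> exists c : rat, ball x r (ratr c : R).
Proof.
move=> r0; have xr : x - r < x + r by rewrite ltrBlDr -addrA ltrDl addr_gt0.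
have [c] := rat_in_itvoo xr.
rewrite in_itv /= => /andP[h1 h2]; exists c.
rewrite /ball /= ltr_distlC; apply/andP; split => //.
Qed.

Lemma open_pre (A : set ('rV[R]_N * R)) : open A -> measurable (a @^-1` A).
Proof.
move=> oA.
have -> : a @^-1` A = \bigcup_(u : U) (if pselect (Bx u `<=` A) then a @^-1` Bx u else set0).
  apply/seteqP; split => q /=; last first.
    by move=> [u _]; case: pselect => // H /H.
  move=> Aq.
  have := oA _ Aq; move=> /nbhs_ballP [e /= e0 He].
  have [r /andP[r0 re]] : exists r : rat, (0 < (ratr r : R)) && ((ratr r : R) < e / 2).
    have e2 : (0 : R) < e / 2 by rewrite divr_gt0.
    have [r] := rat_in_itvoo e2.
    by rewrite in_itv /= => H; exists r.
  have [cf Hc] := choice (fun j : 'I_N => rat_near (w q ord0 j) r0).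
  have [c0 Hc0] := rat_near (s q) r0.
  exists ([ffun j => cf j], c0, r) => //.
  have qB : ball (a q) (ratr r : R) (\row_j (ratr ([ffun j => cf j] j) : R), (ratr c0 : R)).
    split => //=; split => // i j; rewrite (ord1 i) !mxE ffunE; exact: Hc.
  case: pselect => H; last first.
    exfalso; apply: H => z Bz; apply: He.
    apply: (@le_ball _ _ _ ((ratr r : R) + ratr r)).
      by rewrite -mulr2n -mulr_natr -ler_pdivlMr // ltW.
    exact: ball_triangle qB Bz.
  by move/ball_sym: qB.
apply: countable_bigcupT_measurable; first exact: countableP.
move=> u; case: pselect => H /=; [exact: ball_pre | exact: measurable0].
Qed.
Lemma borel_pre (A : set ('rV[R]_N * R)) :
  (<<s @open ('rV[R]_N * R)%type >>) A -> measurable (a @^-1` A).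
Proof.
move: A; apply: (@smallest_sub _ _ _ [set A | measurable (a @^-1` A)]).
  split => /=.
  - by rewrite preimage_set0.
  - by move=> A mA; rewrite setTD preimage_setC; apply: measurableC.
  - by move=> F mF; rewrite preimage_bigcup; apply: bigcupT_measurable.
move=> A oA; exact: open_pre.
Qed.

Lemma borel_comp (h : 'rV[R]_N -> R -> R) : borel_measurable_RnR h ->
  measurable_fun setT (fun q => h (w q) (s q)).
Proof.
move=> hm _ B mB; rewrite setTI.
exact: (borel_pre (hm B mB)).
Qed.
End Bridge.
Section M.
Variable R : realType.
Lemma sqrt_meas : measurable_fun setT (@Num.sqrt R).
Proof. apply: nondecreasing_measurable => // a b ab; exact: ler_wsqrtr. Qed.

Lemma inv_meas : measurable_fun setT (@GRing.inv R).
Proof.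
have -> : [set: R] = ~` [set 0] `|` [set 0] by rewrite setUC setUCr.
apply/measurable_funU => //.
  by apply: measurableC.
split; last exact: measurable_fun_set1.
apply: open_continuous_measurable_fun.
  apply: closed_openC; apply: accessible_closed_set1; apply: hausdorff_accessible; exact: Rhausdorff.
move=> x; rewrite inE /= => /eqP x0; exact: inv_continuous.
Qed.
End M.

Section H.
Variable R : realType.
Implicit Types a b : R.

Lemma sqrt_le_of_sq a s : 0 <= s -> a <= s ^+ 2 -> Num.sqrt a <= s.
Proof.
move=> s0 as2; apply: le_trans (ler_wsqrtr as2) _.
by rewrite sqrtr_sqr ger0_norm.
Qed.

Lemma sqrtD_le a b : 0 <= a -> 0 <= b -> Num.sqrt (a + b) <= Num.sqrt a + Num.sqrt b.
Proof.
move=> a0 b0; apply: sqrt_le_of_sq; first by rewrite addr_ge0 ?sqrtr_ge0.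
rewrite sqrrD !sqr_sqrtr //.
have : 0 <= Num.sqrt a * Num.sqrt b by rewrite mulr_ge0 ?sqrtr_ge0.
lra.
Qed.

Lemma enorm_opp m (u : 'rV[R]_m) : enorm (- u) = enorm u.
Proof. by rewrite /enorm; congr Num.sqrt; apply: eq_bigr => i _; rewrite mxE sqrrN. Qed.

Lemma enorm_sq m (u : 'rV[R]_m) : enorm u ^+ 2 = \sum_(i < m) u ord0 i ^+ 2.
Proof. by rewrite /enorm sqr_sqrtr // sumr_ge0 // => i _; rewrite sqr_ge0. Qed.

Lemma enorm_tri2 m (u v : 'rV[R]_m) : enorm (u + v) <= 2 * (enorm u + enorm v).
Proof.
rewrite {1}/enorm; apply: sqrt_le_of_sq.
  by rewrite mulr_ge0 // addr_ge0 // sqrtr_ge0.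
apply: (@le_trans _ _ (2 * enorm u ^+ 2 + 2 * enorm v ^+ 2)).
  rewrite !enorm_sq !mulr_sumr -big_split /=; apply: ler_sum => i _.
  rewrite mxE.
  have := sqr_ge0 (u ord0 i - v ord0 i).
  set p := u ord0 i; set q := v ord0 i; move=> h.
  nra.
have := sqrtr_ge0 (\sum_(i < m) u ord0 i ^+ 2).
have := sqrtr_ge0 (\sum_(i < m) v ord0 i ^+ 2).
rewrite -/(enorm u) -/(enorm v).
nra.
Qed.

Lemma key (A B D : R) (m : nat) : 0 < A -> 0 < B -> 0 < D -> D <= 2 * (A + B) ->
  (A ^+ m)^-1 * (B ^+ m)^-1 <= 4 ^+ m * (D ^+ m)^-1 * ((A ^+ m)^-1 + (B ^+ m)^-1).
Proof.
wlog BA : A B / B <= A.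
  move=> H A0 B0 D0 DAB; have [BA|AB] := leP B A; first exact: H.
  rewrite mulrC addrC; apply: H => //; first exact: ltW.
  by rewrite addrC.
move=> A0 B0 D0 DAB.
have DA : D <= 4 * A by lra.
have h1 : (A ^+ m)^-1 <= 4 ^+ m * (D ^+ m)^-1.
  have -> : 4 ^+ m * (D ^+ m)^-1 = ((D / 4) ^+ m)^-1.
    by rewrite exprMn exprVn invfM invrK mulrC.
  have D4 : 0 < D / 4 by rewrite divr_gt0.
  rewrite lef_pV2 ?posrE ?exprn_gt0 //.
  apply: lerXn2r; rewrite ?nnegrE; [exact: ltW|exact: ltW|lra].
apply: (@le_trans _ _ ((4 ^+ m * (D ^+ m)^-1) * (B ^+ m)^-1)).
  by rewrite ler_wpM2r // invr_ge0 exprn_ge0 // ltW.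
have hA := ltW A0; have hB := ltW B0; have hD := ltW D0.
rewrite ler_wpM2l ?mulr_ge0 ?invr_ge0 ?exprn_ge0 //.
by rewrite lerDr invr_ge0 exprn_ge0.
Qed.
End H.

Section Main.
Variables (R : realType) (n : nat).
Notation LR := (measurableTypeR R).
Definition kk (u : 'rV[R]_n) (s : R) : R := ((enorm u + Num.sqrt s) ^+ n.+1)^-1.

Lemma enorm_ge0 m (u : 'rV[R]_m) : 0 <= enorm u.
Proof. exact: sqrtr_ge0. Qed.

Lemma kk_ge0 u s : 0 <= kk u s.
Proof. by rewrite /kk invr_ge0 exprn_ge0 // addr_ge0 // ?enorm_ge0 ?sqrtr_ge0. Qed.

Lemma meas_enorm m d' (T' : measurableType d') (w : T' -> 'rV[R]_m) :
  (forall j, measurable_fun setT (fun q => w q ord0 j)) ->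
  measurable_fun setT (fun q => enorm (w q)).
Proof.
move=> mw; rewrite /enorm; apply: (measurableT_comp (@sqrt_meas R)).
by apply: measurable_sum => j; apply: measurable_funX.
Qed.

Lemma pw (x y z : 'rV[R]_n) (t tau e : R) : 0 < tau -> tau < t -> 0 <= e ->
  kk (x - z) (t - tau) * (e / (enorm (z - y) + Num.sqrt tau) ^+ n.+1) <=
  4 ^+ n.+1 * kk (x - y) t * (kk (x - z) (t - tau) * e + kk (y - z) tau * e).
Proof.
move=> tau0 taut e0.
have ty : kk (y - z) tau = ((enorm (z - y) + Num.sqrt tau) ^+ n.+1)^-1.
  by rewrite /kk -opprB enorm_opp.
rewrite ty /kk.
set A := enorm (x - z) + Num.sqrt (t - tau).
set B := enorm (z - y) + Num.sqrt tau.
set D := enorm (x - y) + Num.sqrt t.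
have A0 : 0 < A by rewrite /A ltr_wpDl ?enorm_ge0 // sqrtr_gt0 subr_gt0.
have B0 : 0 < B by rewrite /B ltr_wpDl ?enorm_ge0 // sqrtr_gt0.
have D0 : 0 < D by rewrite /D ltr_wpDl ?enorm_ge0 // sqrtr_gt0 (lt_trans tau0).
have DAB : D <= 2 * (A + B).
  have h1 : enorm (x - y) <= 2 * (enorm (x - z) + enorm (z - y)).
    by have := enorm_tri2 (x - z) (z - y); rewrite addrA subrK.
  have h2 : Num.sqrt t <= Num.sqrt (t - tau) + Num.sqrt tau.
    rewrite -{1}(subrK tau t); apply: sqrtD_le; last exact: ltW.
    by rewrite subr_ge0 ltW.
  have := sqrtr_ge0 (t - tau); have := sqrtr_ge0 tau.
  rewrite /D /A /B; lra.
have := key (n.+1) A0 B0 D0 DAB.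
set iA := (A ^+ n.+1)^-1; set iB := (B ^+ n.+1)^-1; set iD := (D ^+ n.+1)^-1.
move=> /(ler_wpM2r e0).
have -> : iA * (e / B ^+ n.+1) = iA * iB * e by rewrite -mulrA [X in iA * X]mulrC.
move=> /le_trans; apply.
by rewrite le_eqVlt; apply/orP; left; apply/eqP; ring.
Qed.

Variable b : 'rV[R]_n -> R -> 'rV[R]_n.
Hypothesis hb : forall i, borel_measurable_RnR (fun z tau => b z tau ord0 i).

Definition MP (F : LR -> 'rV[R]_n -> R) := forall d' (T' : measurableType d') (g : T' -> LR)
  (w : T' -> 'rV[R]_n), measurable_fun setT g ->
  (forall j, measurable_fun setT (fun q => w q ord0 j)) ->
  measurable_fun setT (fun q => F (g q) (w q)).

Lemma MP_J F : MP F -> Jm (fun tau z => (F tau z)%:E).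
Proof. move=> H; apply: Jm_crit => d' T' g w mg mw; apply/measurable_EFinP; exact: H. Qed.

Lemma MP_D F1 F2 : MP F1 -> MP F2 -> MP (fun tau z => F1 tau z + F2 tau z).
Proof. move=> H1 H2 d' T' g w mg mw; apply: measurable_funD; [exact: H1|exact: H2]. Qed.

Lemma MP_P (c : 'rV[R]_n) (phi : R -> R) : measurable_fun setT phi ->
  MP (fun (tau : LR) z => kk (c - z) (phi tau) * enorm (b z tau)).
Proof.
move=> mphi d' T' g w mg mw.
apply: measurable_funM.
  rewrite /kk; apply: (measurableT_comp (@inv_meas R)); apply: measurable_funX.
  apply: measurable_funD.
    apply: meas_enorm => j.
    have -> : (fun q => (c - w q) ord0 j) = (fun q => c ord0 j - w q ord0 j).
      by apply/funext => q; rewrite !mxE.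
    exact: measurable_funB.
  apply: (measurableT_comp (@sqrt_meas R)); exact: measurableT_comp mphi mg.
apply: meas_enorm => j.
exact: (borel_comp mw mg (hb j)).
Qed.
End Main.

Theorem lemma3p1 (R : realType) (n : nat) :
  exists C : R,
  forall b : 'rV[R]_n -> R -> 'rV[R]_n,
  locally_integrable_vf b ->
  forall (x y : 'rV[R]_n) (t : R), 0 < t ->
  (\int[@lebesgue_measure R]_(tau in `]0%R, t%R[)
     iint (fun z : 'rV[R]_n =>
       ((enorm (x - z) + Num.sqrt (t - tau)) ^+ n.+1)^-1%:E
       * (enorm (b z tau) / (enorm (z - y) + Num.sqrt tau) ^+ n.+1)%:E)
   <= C%:E * Bfun b 0 t * K1 x t y 0)%E.
Proof.
exists (2 * 4 ^+ n.+1).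
move=> b [hb _] x y t t0.
pose c : R := 4 ^+ n.+1.
pose K := kk (x - y) t.
pose G := fun (tau : measurableTypeR R) z => kk (x - z) (t - tau) * enorm (b z tau).
pose H := fun (tau : measurableTypeR R) z => kk (y - z) tau * enorm (b z tau).
have mG' : MP G.
  apply: MP_P => //.
  exact: measurable_funB.
have mH' : MP H by apply: MP_P.
have mG : Jm (fun tau z => (G tau z)%:E) by apply: MP_J.
have mH : Jm (fun tau z => (H tau z)%:E) by apply: MP_J.
have mGH : Jm (fun tau z => (G tau z + H tau z)%:E) by apply: MP_J; apply: MP_D.
have G0 tau z : (0 <= (G tau z)%:E)%E by rewrite lee_fin mulr_ge0 ?kk_ge0 ?enorm_ge0.
have H0 tau z : (0 <= (H tau z)%:E)%E by rewrite lee_fin mulr_ge0 ?kk_ge0 ?enorm_ge0.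
have K0 : 0 < K.
  by rewrite /K /kk invr_gt0 exprn_gt0 // ltr_wpDl ?enorm_ge0 ?sqrtr_gt0.
have K1E : K1 x t y 0 = K%:E.
  by rewrite /K1 ltNge (ltW t0) /= (gt_eqF t0) andbF subr0.
pose IG := fun tau => iint (fun z => (G tau z)%:E).
pose IH := fun tau => iint (fun z => (H tau z)%:E).
have mIG : measurable_fun setT IG := Jm_meas (fun tau z => G0 tau z) mG.
have mIH : measurable_fun setT IH := Jm_meas (fun tau z => H0 tau z) mH.
have IG0 tau : (0 <= IG tau)%E by apply: iint_ge0.
have IH0 tau : (0 <= IH tau)%E by apply: iint_ge0.
have step1 : (\int[@lebesgue_measure R]_(tau in `]0%R, t%R[)
     iint (fun z : 'rV[R]_n =>
       ((enorm (x - z) + Num.sqrt (t - tau)) ^+ n.+1)^-1%:E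
       * (enorm (b z tau) / (enorm (z - y) + Num.sqrt tau) ^+ n.+1)%:E) <=
   \int[@lebesgue_measure R]_(tau in `]0%R, t%R[) ((c * K)%:E * (IG tau + IH tau)))%E.
  apply: int_mono.
    move=> tau _; apply: iint_ge0 => z.
    by rewrite -EFinM lee_fin mulr_ge0 ?divr_ge0 ?enorm_ge0 ?invr_ge0 ?exprn_ge0 ?addr_ge0 ?enorm_ge0 ?sqrtr_ge0.
  move=> tau; rewrite /= in_itv /= => /andP[tau0 taut].
  have E1 := iintD G0 H0 mG mH tau.
  have cK0 : 0 <= c * K by rewrite mulr_ge0 ?exprn_ge0 // ltW.
  have GH0 p v : (0 <= (G p v + H p v)%:E)%E by rewrite EFinD adde_ge0.
  have E2 := iintZ cK0 GH0 mGH tau.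
  have E3 : iint (fun v => (G tau v + H tau v)%:E) = iint (fun v => (G tau v)%:E + (H tau v)%:E).
    by congr iint; apply/funext => v; rewrite EFinD.
  rewrite /IG /IH -E1 -E3 -E2.
  apply: iint_mono => z.
    by rewrite -EFinM lee_fin mulr_ge0 ?divr_ge0 ?enorm_ge0 ?invr_ge0 ?exprn_ge0 ?addr_ge0 ?enorm_ge0 ?sqrtr_ge0.
  rewrite -!EFinM lee_fin.
  exact: (pw x y z tau0 taut (enorm_ge0 (b z tau))).
apply: (le_trans step1).
have cK0 : 0 <= c * K by rewrite mulr_ge0 ?exprn_ge0 // ltW.
have mD : measurable (`]0%R, t[ : set (measurableTypeR R)) by exact: measurable_itv.
have mIGD : measurable_fun `]0%R, t[ IG := measurable_funS measurableT (@subsetT _ _) mIG.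
have mIHD : measurable_fun `]0%R, t[ IH := measurable_funS measurableT (@subsetT _ _) mIH.
rewrite (ge0_integralZl_EFin _ mD) //; last 2 first.
- by move=> tau _; rewrite adde_ge0.
- exact: emeasurable_funD.
rewrite (ge0_integralD _ mD) //.
set B := Bfun b 0 t.
have BG : (\int[@lebesgue_measure R]_(tau in `]0%R, t%R[) IG tau <= B)%E.
  have : range (fun x0 : 'rV[R]_n =>
    (\int[@lebesgue_measure R]_(s in `]0%R, t%R[)
       iint (fun y0 : 'rV[R]_n => (K1 x0 t y0 s + K1 x0 s y0 0) * (enorm (b y0 s))%:E))%E)
    (\int[@lebesgue_measure R]_(s in `]0%R, t%R[)
       iint (fun y0 : 'rV[R]_n => (K1 x t y0 s + K1 x s y0 0) * (enorm (b y0 s))%:E))%E.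
    by exists x.
  move/ereal_sup_ubound => /(le_trans _); apply.
  apply: int_mono => // s; rewrite /= in_itv /= => /andP[s0 st].
  apply: iint_mono => // z.
  have E1 : K1 x t z s = (kk (x - z) (t - s))%:E.
    by rewrite /K1 ltNge (ltW st) /= (gt_eqF st) andbF.
  have E2 : K1 x s z 0 = (kk (x - z) s)%:E.
    by rewrite /K1 ltNge (ltW s0) /= (gt_eqF s0) andbF subr0.
  rewrite E1 E2 -EFinD -EFinM lee_fin /G ler_wpM2r ?enorm_ge0 //.
  by rewrite lerDl kk_ge0.
have BH : (\int[@lebesgue_measure R]_(tau in `]0%R, t%R[) IH tau <= B)%E.
  have : range (fun x0 : 'rV[R]_n =>
    (\int[@lebesgue_measure R]_(s in `]0%R, t%R[)
       iint (fun y0 : 'rV[R]_n => (K1 x0 t y0 s + K1 x0 s y0 0) * (enorm (b y0 s))%:E))%E)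
    (\int[@lebesgue_measure R]_(s in `]0%R, t%R[)
       iint (fun y0 : 'rV[R]_n => (K1 y t y0 s + K1 y s y0 0) * (enorm (b y0 s))%:E))%E.
    by exists y.
  move/ereal_sup_ubound => /(le_trans _); apply.
  apply: int_mono => // s; rewrite /= in_itv /= => /andP[s0 st].
  apply: iint_mono => // z.
  have E1 : K1 y t z s = (kk (y - z) (t - s))%:E.
    by rewrite /K1 ltNge (ltW st) /= (gt_eqF st) andbF.
  have E2 : K1 y s z 0 = (kk (y - z) s)%:E.
    by rewrite /K1 ltNge (ltW s0) /= (gt_eqF s0) andbF subr0.
  rewrite E1 E2 -EFinD -EFinM lee_fin /H ler_wpM2r ?enorm_ge0 //.
  by rewrite lerDr kk_ge0.
have IG0' : (0 <= \int[@lebesgue_measure R]_(tau in `]0%R, t%R[) IG tau)%E.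
  by apply: integral_ge0 => tau _.
have IH0' : (0 <= \int[@lebesgue_measure R]_(tau in `]0%R, t%R[) IH tau)%E.
  by apply: integral_ge0 => tau _.
have B0 : (0 <= B)%E := le_trans IG0' BG.
rewrite K1E.
move: B0 BG BH; case: B => [r| |] // B0 BG BH.
  apply: (@le_trans _ _ ((c * K)%:E * (r%:E + r%:E))%E).
    apply: lee_pmul => //; first by rewrite adde_ge0.
    exact: leeD.
  rewrite -EFinD -!EFinM lee_fin /c.
  by rewrite le_eqVlt; apply/orP; left; apply/eqP; ring.
rewrite gt0_muley ?lte_fin ?mulr_gt0 ?exprn_gt0 // gt0_mulye ?lte_fin //.
exact: leey.
Qed.
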